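(* Let $F$ be a Sturmian set on an alphabet with $k$ letters and let $X\subset F$ be a finite $F$-maximal bifix code of $F$-degree $d$. Let $P$ (resp. $S$) be the set of proper prefixes (resp. proper suffixes) of words of $X$, including the empty word. Then $\sum_{x\in X}|x|=\mathrm{Card}(P)+\mathrm{Card}(S)+(k-2)d$.
   Context: A word $u\in F$ is right-special if $ua\in F$ for at least two letters $a$. An infinite word $x$ is strict episturmian if its set of factors $F(x)$ is closed under reversal, has exactly one right-special word of each length, and each right-special factor $u$ has $ua\in F(x)$ for every letter $a$; a Sturmian set is the set of factors of a strict episturmian word. A bifix code is a set of nonempty words none of which is a proper prefix or proper suffix of another; $X\subset F$ is $F$-maximal bifix if not properly contained in a bifix code contained in $F$. A parse of $w$ with respect to $X$ is a triple $(v,x,u)$ with $w=vxu$, $v$ having no suffix in $X$, $x\in X^*$, $u$ having no prefix in $X$; $d_F(X)$ is the maximum over $w\in F$ of the number of parses. *)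

(* Defs.v *)
From mathcomp Require Import all_boot all_order all_algebra.
Set Implicit Arguments. Unset Strict Implicit. Unset Printing Implicit Defensive.

Section Words.
Variable A : finType.

Definition factor (x : nat -> A) (w : seq A) : Prop :=
  exists i, w = mkseq (fun j => x (i + j)) (size w).

Definition right_special (F : seq A -> Prop) (u : seq A) : Prop :=
  F u /\ exists a b : A, a != b /\ F (rcons u a) /\ F (rcons u b).

Definition strict_episturmian (x : nat -> A) : Prop :=
  (forall w, factor x w -> factor x (rev w)) /\
  (forall n, exists u, size u = n /\ right_special (factor x) u /\
       forall v, size v = n -> right_special (factor x) v -> v = u) /\
  (forall u, right_special (factor x) u -> forall a : A, factor x (rcons u a)).

Definition proper_prefix (u v : seq A) : bool := prefix u v && (u != v).
Definition proper_suffix (u v : seq A) : bool := suffix u v && (u != v).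

Definition bifix_code (Y : seq A -> Prop) : Prop :=
  (forall y, Y y -> y != [::]) /\
  (forall u v, Y u -> Y v -> ~~ proper_prefix u v /\ ~~ proper_suffix u v).

Definition F_maximal_bifix (F : seq A -> Prop) (X : seq (seq A)) : Prop :=
  bifix_code (fun w => w \in X) /\ (forall w, w \in X -> F w) /\
  forall Y : seq A -> Prop, bifix_code Y -> (forall y, Y y -> F y) ->
    (forall w, w \in X -> Y w) -> forall y, Y y -> y \in X.

Definition in_star (X : seq (seq A)) (w : seq A) : Prop :=
  exists s : seq (seq A), all (fun y => y \in X) s /\ w = flatten s.

Definition is_parse (X : seq (seq A)) (w : seq A) (t : seq A * seq A * seq A) :
    Prop :=
  let: (v, x, u) := t in
  w = v ++ x ++ u /\ (forall s, suffix s v -> s \notin X) /\ in_star X x /\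
  (forall p, prefix p u -> p \notin X).

Definition num_parses (X : seq (seq A)) (w : seq A) (n : nat) : Prop :=
  exists s : seq (seq A * seq A * seq A),
    uniq s /\ (forall t, t \in s <-> is_parse X w t) /\ size s = n.

Definition F_degree (F : seq A -> Prop) (X : seq (seq A)) (d : nat) : Prop :=
  (exists w, F w /\ num_parses X w d) /\
  (forall w n, F w -> num_parses X w n -> n <= d).

Definition proper_prefixes (X : seq (seq A)) : seq (seq A) :=
  undup (flatten [seq [seq take i y | i <- iota 0 (size y)] | y <- X]).
Definition proper_suffixes (X : seq (seq A)) : seq (seq A) :=
  undup (flatten [seq [seq drop i.+1 y | i <- iota 0 (size y)] | y <- X]).

End Words.

(* Main.v *)
Require Import Defs.
From mathcomp Require Import all_boot all_order all_algebra.
From Stdlib Require Import ClassicalEpsilon Lia.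
Set Implicit Arguments. Unset Strict Implicit. Unset Printing Implicit Defensive.


Section Gen.
Variable A : finType.
Implicit Types (Y : seq (seq A)) (w u v : seq A).

Definition nosuf Y v := all (fun y => ~~ suffix y v) Y.
Definition nopre Y u := all (fun y => ~~ prefix y u) Y.

Lemma nosufP Y v : reflect (forall s, suffix s v -> s \notin Y) (nosuf Y v).
Proof.
apply: (iffP allP) => H.
- move=> s sv; apply/negP => sY; by move: (H s sY); rewrite sv.
- move=> y yY; apply/negP => yv; by move: (H y yv); rewrite yY.
Qed.

Lemma nopreP Y v : reflect (forall s, prefix s v -> s \notin Y) (nopre Y v).
Proof.
apply: (iffP allP) => H.
- move=> s sv; apply/negP => sY; by move: (H s sY); rewrite sv.
- move=> y yY; apply/negP => yv; by move: (H y yv); rewrite yY.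
Qed.

Definition pcode Y := forall u v, u \in Y -> v \in Y -> prefix u v -> u = v.
Definition scode Y := forall u v, u \in Y -> v \in Y -> suffix u v -> u = v.

Lemma prefix_comp a b w : prefix a w -> prefix b w -> prefix a b || prefix b a.
Proof.
rewrite [prefix a w]prefixE [prefix b w]prefixE => /eqP Ha /eqP Hb.
case: (leqP (size a) (size b)) => h.
- by apply/orP; left; rewrite prefixE -Hb take_takel // Ha.
- by apply/orP; right; rewrite prefixE -Ha take_takel ?Hb // ltnW.
Qed.

Lemma suffix_comp a b w : suffix a w -> suffix b w -> suffix a b || suffix b a.
Proof.
rewrite -!prefix_rev => Ha Hb.
by have := prefix_comp Ha Hb; rewrite !prefix_rev.
Qed.

Fixpoint dec Y n w : seq A * seq A :=
  if n is n'.+1 then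
    if find (fun y => prefix y w) Y < size Y then
      let y := nth [::] Y (find (fun y => prefix y w) Y) in
      let r := dec Y n' (drop (size y) w) in (y ++ r.1, r.2)
    else ([::], w)
  else ([::], w).

Lemma nopre_has Y w : nopre Y w = ~~ has (fun y => prefix y w) Y.
Proof. by rewrite /nopre -all_predC. Qed.

Lemma dec_spec Y n w : [::] \notin Y -> size w < n ->
  [/\ w = (dec Y n w).1 ++ (dec Y n w).2, in_star Y (dec Y n w).1 & nopre Y (dec Y n w).2].
Proof.
move=> Yne; elim: n w => [//|n IH] w /= Hw.
case: ifP => Hf; last first.
  split => //; first by exists [::].
  by rewrite nopre_has has_find Hf.
set y := nth [::] Y _.
have yY : y \in Y by rewrite mem_nth.
have yw : prefix y w by apply: (@nth_find _ [::] (fun y => prefix y w)); rewrite has_find.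
have y0 : 0 < size y by case: (y) yY Yne => // yY Yne; rewrite yY in Yne.
have Hs : size (drop (size y) w) < n.
  rewrite size_drop; apply: (@leq_trans (size w)); last by [].
  by rewrite ltn_subrL y0 (leq_trans y0 (size_prefix yw)).
have [E1 [s [Hs1 Hs2]] E3] := IH _ Hs.
split => //=.
- move: yw; rewrite prefixE => /eqP yw.
  by rewrite -catA -E1 -{1}yw cat_take_drop.
- by exists (y :: s); rewrite /= yY Hs1 Hs2.
Qed.

Lemma dec_uniq Y n s u : pcode Y -> [::] \notin Y -> all (fun y => y \in Y) s ->
  nopre Y u -> size (flatten s ++ u) < n -> dec Y n (flatten s ++ u) = (flatten s, u).
Proof.
move=> PC Yne; elim: n s => [//|n IH] [|y s] /=.
- by move=> _ Hu _; rewrite nopre_has has_find in Hu; rewrite ifN.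
- move=> /andP [yY Hs] Hu Hsz; rewrite -catA in Hsz *.
  have Hh : has (fun y' => prefix y' (y ++ flatten s ++ u)) Y.
    by apply/hasP; exists y => //; apply: prefix_prefix.
  rewrite -has_find Hh.
  set y0 := nth [::] Y _.
  have y0Y : y0 \in Y by rewrite mem_nth // -has_find.
  have y0w : prefix y0 (y ++ flatten s ++ u) by apply: (@nth_find _ [::] (fun y1 => prefix y1 (y ++ flatten s ++ u))).
  have Ey : y0 = y.
    case/orP: (prefix_comp y0w (prefix_prefix y (flatten s ++ u))) => h.
    + exact: PC.
    + by apply/esym/PC.
  rewrite Ey drop_size_cat // IH //.
  move: Hsz; rewrite !size_cat ltnS => h; apply: leq_trans h.
  have yp : 0 < size y by case: (y) yY Yne => // yY Yne; rewrite yY in Yne.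
  by rewrite -size_cat -[X in X < _]add0n ltn_add2r.
Qed.

Arguments dec : simpl never.

Definition ptrip Y w i : seq A * seq A * seq A :=
  (take i w, (dec Y (size w).+1 (drop i w)).1, (dec Y (size w).+1 (drop i w)).2).
Definition plist Y w := [seq ptrip Y w i | i <- iota 0 (size w).+1 & nosuf Y (take i w)].
Definition dpre Y w := count (fun i => nosuf Y (take i w)) (iota 0 (size w).+1).

Lemma plist_uniq Y w : uniq (plist Y w).
Proof.
rewrite map_inj_in_uniq ?filter_uniq ?iota_uniq //.
move=> i j; rewrite !mem_filter !mem_iota /= !add0n !ltnS => /andP [_ hi] /andP [_ hj].
by case => E _ _; move: (congr1 size E); rewrite !size_takel.
Qed.

Lemma plistP Y w t : pcode Y -> [::] \notin Y -> (t \in plist Y w <-> is_parse Y w t).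
Proof.
move=> PC Yne; split.
- case/mapP => i; rewrite mem_filter mem_iota /= add0n ltnS => /andP [Hn Hi] ->.
  have Hs : size (drop i w) < (size w).+1 by rewrite size_drop ltnS leq_subr.
  have [E1 E2 E3] := dec_spec Yne Hs.
  rewrite /ptrip /=; split; [|split; [|split]] => //.
  + by rewrite -E1 cat_take_drop.
  + exact/nosufP.
  + exact/nopreP.
- case: t => [[v x0] u] /= [Ew [Hv [[s [Hs Ex]] Hu]]].
  have Hsz : size w = size v + size x0 + size u by rewrite Ew !size_cat addnA.
  apply/mapP; exists (size v).
    rewrite mem_filter mem_iota /= add0n ltnS Hsz -addnA leq_addr andbT.
    by rewrite Ew take_size_cat //; apply/nosufP.
  rewrite /ptrip Ew take_size_cat // drop_size_cat //.
  have Hu' : nopre Y u by apply/nopreP.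
  rewrite Ex dec_uniq // -Ex -Ew ?Hsz -?addnA ?ltnS //.
  by rewrite size_cat leq_addl.
Qed.

Lemma size_plist Y w : size (plist Y w) = dpre Y w.
Proof. by rewrite size_map size_filter. Qed.

Lemma np_func Y w n : pcode Y -> [::] \notin Y -> num_parses Y w n -> n = dpre Y w.
Proof.
move=> PC Yne [s [Us [Hs Sz]]]; rewrite -Sz -size_plist; apply: perm_size.
apply: uniq_perm => //; first exact: plist_uniq.
move=> t; apply/idP/idP => h.
- by apply/plistP => //; apply/Hs.
- by apply/Hs; apply/plistP.
Qed.

Lemma np_dpre Y w : pcode Y -> [::] \notin Y -> num_parses Y w (dpre Y w).
Proof.
move=> PC Yne; exists (plist Y w); split; first exact: plist_uniq.
split; last exact: size_plist.
by move=> t; apply: plistP.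
Qed.

End Gen.


Section Gen2.
Variable A : finType.
Implicit Types (Y : seq (seq A)) (w u v : seq A).

Lemma dpre_rcons Y w a : dpre Y (rcons w a) = dpre Y w + nosuf Y (rcons w a).
Proof.
rewrite /dpre size_rcons -(addn1 (size w).+1) iotaD count_cat add0n.
have -> : count (fun i => nosuf Y (take i (rcons w a))) (iota (size w).+1 1)
   = nosuf Y (rcons w a).
  by rewrite [iota _ 1]/= [count _ [:: _]]/= addn0 take_oversize ?size_rcons.
congr (_ + _); apply: eq_in_count => i; rewrite mem_iota add0n ltnS => /andP [_ hi].
by rewrite -cats1 takel_cat.
Qed.

Lemma dpre_nil Y : dpre Y [::] = nosuf Y [::].
Proof. by rewrite /dpre /= addn0. Qed.

Lemma dpre_cat Y w v : dpre Y w <= dpre Y (w ++ v).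
Proof.
elim/last_ind: v => [|v a IH]; first by rewrite cats0.
by rewrite -rcons_cat dpre_rcons (leq_trans IH) // leq_addr.
Qed.

Definition dsuf Y w := dpre (map rev Y) (rev w).

Lemma nosuf_rev Y u : nosuf (map rev Y) (rev u) = nopre Y u.
Proof. by rewrite /nosuf all_map; apply: eq_all => y /=; rewrite suffix_rev. Qed.

Lemma nopre_rev Y u : nopre (map rev Y) (rev u) = nosuf Y u.
Proof. by rewrite /nopre all_map; apply: eq_all => y /=; rewrite prefix_rev. Qed.

Lemma dsuf_cons Y a w : dsuf Y (a :: w) = dsuf Y w + nopre Y (a :: w).
Proof. by rewrite /dsuf rev_cons dpre_rcons -rev_cons nosuf_rev. Qed.

Lemma dsuf_cat Y w v : dsuf Y w <= dsuf Y (v ++ w).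
Proof.
elim: v => [//|a v IH].
by rewrite cat_cons dsuf_cons (leq_trans IH) // leq_addr.
Qed.

Definition revt (t : seq A * seq A * seq A) : seq A * seq A * seq A :=
  let: (v, x0, u) := t in (rev u, rev x0, rev v).

Lemma revtK : cancel revt revt.
Proof. by case=> [[v x0] u] /=; rewrite !revK. Qed.

Lemma parse_rev Y w t : is_parse Y w t -> is_parse (map rev Y) (rev w) (revt t).
Proof.
case: t => [[v x0] u] /= [Ew [Hv [[s [Hs Ex]] Hu]]].
split; [|split; [|split]].
- by rewrite Ew !rev_cat catA.
- by apply/nosufP; rewrite nosuf_rev; apply/nopreP.
- exists (rev (map rev s)); split; last by rewrite Ex rev_flatten.
  rewrite all_rev all_map; apply/allP => y ys /=.
  by apply: map_f; move/allP: Hs; apply.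
- by apply/nopreP; rewrite nopre_rev; apply/nosufP.
Qed.

Lemma np_rev Y w n : num_parses Y w n -> num_parses (map rev Y) (rev w) n.
Proof.
move=> [s [Us [Hs Sz]]]; exists (map revt s); split.
  by rewrite map_inj_uniq //; apply: can_inj revtK.
split; last by rewrite size_map.
move=> t; split.
- by case/mapP => t0 /Hs h ->; apply: parse_rev.
- move=> /parse_rev; rewrite mapK ?revK; last exact: revK.
  move=> /Hs h; by rewrite -(revtK t) map_f.
Qed.

Lemma pcode_rev Y : scode Y -> pcode (map rev Y).
Proof.
move=> SC u v /mapP [u0 u0Y ->] /mapP [v0 v0Y ->]; rewrite prefix_rev => h.
by rewrite (SC _ _ u0Y v0Y h).
Qed.

Lemma ne_rev Y : [::] \notin Y -> [::] \notin map rev Y.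
Proof.
move=> Yne; apply/mapP => [[y yY Ey]].
have : size y == 0 by rewrite -size_rev -Ey.
rewrite size_eq0 => /eqP Ey'; rewrite Ey' in yY; by rewrite yY in Yne.
Qed.

Lemma dsuf_dpre Y w : pcode Y -> scode Y -> [::] \notin Y -> dsuf Y w = dpre Y w.
Proof.
move=> PC SC Yne; have h := np_rev (np_dpre w PC Yne).
by rewrite /dsuf -(np_func (pcode_rev SC) (ne_rev Yne) h).
Qed.

End Gen2.


Ltac tonat := repeat match goal with
 | H : is_true (_ <= _) |- _ => move/leP: H => H; rewrite -?plusE -?minusE -?multE in H
 | H : is_true (_ < _) |- _ => move/ltP: H => H; rewrite -?plusE -?minusE -?multE in H
 end.
Ltac mlia := tonat; first [apply/ltP | apply/leP | idtac]; rewrite -?plusE -?minusE -?multE; lia.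

Section Fac.
Variable A : finType.
Variable x : nat -> A.

Definition seg i n : seq A := mkseq (fun j => x (i + j)) n.

Lemma size_seg i n : size (seg i n) = n.
Proof. by rewrite size_mkseq. Qed.

Lemma segD i m n : seg i (m + n) = seg i m ++ seg (i + m) n.
Proof.
rewrite /seg /mkseq iotaD map_cat add0n; congr (_ ++ _).
rewrite -{1}(addn0 m) iotaDl -map_comp; apply: eq_map => j /=; by rewrite addnA.
Qed.

Lemma factorE w : factor x w <-> exists i, w = seg i (size w).
Proof. by []. Qed.

Lemma factor_seg i n : factor x (seg i n).
Proof. by exists i; rewrite size_seg. Qed.

Lemma factor_cat u v : factor x (u ++ v) -> factor x u /\ factor x v.
Proof.
case=> i; rewrite size_cat -/(seg i _) segD => /eqP; rewrite eqseq_cat ?size_seg //.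
by case/andP => /eqP -> /eqP ->; split; apply: factor_seg.
Qed.

Lemma factor_catl u v : factor x (u ++ v) -> factor x u.
Proof. by case/factor_cat. Qed.
Lemma factor_catr u v : factor x (u ++ v) -> factor x v.
Proof. by case/factor_cat. Qed.

Lemma factor_ext w n : factor x w -> exists v, size v = n /\ factor x (w ++ v).
Proof.
case=> i Ew; exists (seg (i + size w) n); split; first exact: size_seg.
by rewrite {1}Ew -segD; apply: factor_seg.
Qed.

Lemma factor_nil : factor x [::].
Proof. by exists 0. Qed.

Hypothesis Hrev : forall w, factor x w -> factor x (rev w).

Lemma occ_far u : factor x u -> forall N, exists i, N <= i /\ u = seg i (size u).
Proof.
move=> /Hrev [j0 Ej] N; rewrite size_rev in Ej.
set K := j0 + size u + N.
have [r Er] := Hrev (factor_seg 0 K).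
rewrite size_rev size_seg in Er.
exists (r + N); split; first exact: leq_addl.
apply: (@eq_from_nth _ (x 0)); first by rewrite size_seg.
move=> t ht.
have Hr : forall j, j < K -> x (r + j) = x (K - j.+1).
  move=> j hj; have := congr1 (fun s => nth (x 0) s j) Er => /=.
  rewrite nth_rev ?size_seg // !nth_mkseq // ?add0n //; last by rewrite subnSK // leq_subr.
rewrite -[u]revK nth_rev ?size_rev // Ej nth_mkseq; last first.
mlia.
rewrite /seg nth_mkseq // -addnA Hr; last by rewrite /K; mlia.
by f_equal; rewrite /K; mlia.
Qed.

Lemma factor_join u w : factor x u -> factor x w -> exists z, factor x (u ++ z ++ w).
Proof.
case=> i Eu Fw; have [j [hj Ew]] := occ_far Fw (i + size u).
exists (seg (i + size u) (j - (i + size u))).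
have Eu' : seg i (size u) = u by rewrite /seg -Eu.
set m := j - (i + size u).
have -> : u ++ seg (i + size u) m ++ w = seg i (size u + (m + size w)).
  by rewrite segD segD Eu' /m subnKC // -Ew.
exact: factor_seg.
Qed.

End Fac.


Lemma sum_bool (J : Type) (r : seq J) (a : J -> bool) :
  \sum_(j <- r) (a j : nat) = count a r.
Proof. by elim: r => [|j r IH]; rewrite ?big_nil ?big_cons ?IH. Qed.

Section All.
Variable A : finType.

Fixpoint allw n : seq (seq A) :=
  if n is n'.+1 then [seq rcons w a | w <- allw n', a <- enum A] else [:: [::]].

Lemma mem_allw n w : (w \in allw n) = (size w == n).
Proof.
elim: n w => [|n IH] w /=; first by rewrite inE -size_eq0.
apply/allpairsP/idP.
- by case=> [[w' a] /= [hw ha ->]]; rewrite size_rcons eqSS -IH.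
- case/lastP: w => [//|w a]; rewrite size_rcons eqSS => h.
  by exists (w, a); rewrite /= IH h mem_enum.
Qed.

Lemma uniq_allw n : uniq (allw n).
Proof.
elim: n => [//|n IH] /=; apply: allpairs_uniq => //; first exact: enum_uniq.
by move=> [w a] [w' a'] _ _ /= /rcons_inj [-> ->].
Qed.

Lemma sum_allwS n (F : seq A -> nat) :
  \sum_(w <- allw n.+1) F w = \sum_(w <- allw n) \sum_(a <- enum A) F (rcons w a).
Proof. exact: big_allpairs_dep. Qed.

Lemma count_allw (Z : seq (seq A)) m : uniq Z ->
  \sum_(w <- allw m) (w \in Z : nat) = count (fun z => size z == m) Z.
Proof.
move=> UZ; rewrite sum_bool -!size_filter; apply: perm_size.
apply: uniq_perm; rewrite ?filter_uniq ?uniq_allw //.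
by move=> w; rewrite !mem_filter mem_allw andbC.
Qed.

Lemma sum_single (l : seq (seq A)) (P : pred (seq A)) r (g : seq A -> nat) :
  uniq l -> r \in l -> (forall w, w \in l -> P w = (w == r)) ->
  \sum_(w <- l) (if P w then g w else 0) = g r.
Proof.
move=> Ul rl HP; rewrite -big_mkcond /= -big_filter.
have -> : [seq w <- l | P w] = [:: r].
  apply: perm_small_eq => //; apply: uniq_perm; rewrite ?filter_uniq //.
  move=> w; rewrite mem_filter inE; apply/andP/eqP => [[Pw wl]|->].
    by move: Pw; rewrite HP // => /eqP.
  by rewrite HP // eqxx.
by rewrite big_seq1.
Qed.

End All.

Lemma sum_size_count (T : eqType) (Z : seq (seq T)) N : all (fun z => size z < N) Z ->
  \sum_(0 <= m < N) count (fun z => size z == m) Z = size Z.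
Proof.
elim: Z => [|z Z IH] /=; first by rewrite big1 // => m _.
case/andP => hz hZ.
rewrite big_split /= IH // addnC -addn1; congr (_ + _).
rewrite (bigD1_seq (size z)) /=; last by rewrite /index_iota iota_uniq.
  rewrite eqxx big1 ?addn0 //.
  by move=> m /negPf; rewrite eq_sym => ->.
by rewrite /index_iota mem_iota subn0.
Qed.


Definition pb (P : Prop) : bool := if excluded_middle_informative P then true else false.
Lemma pbP (P : Prop) : reflect P (pb P).
Proof. by rewrite /pb; case: excluded_middle_informative => h; constructor. Qed.

Lemma prefix_eq_size (T : eqType) (u v : seq T) : prefix u v -> size v <= size u -> u = v.
Proof.
move=> /prefixP [s ->]; rewrite size_cat -{2}[size u]addn0 leq_add2l leqn0 size_eq0.
by move/eqP ->; rewrite cats0.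
Qed.

Lemma suffix_eq_size (T : eqType) (u v : seq T) : suffix u v -> size v <= size u -> u = v.
Proof.
rewrite -prefix_rev => h hs; rewrite -[u]revK (prefix_eq_size h) ?revK //.
by rewrite !size_rev.
Qed.

Lemma prefix_rcons_le (T : eqType) (y p : seq T) a :
  prefix y (rcons p a) -> size y <= size p -> prefix y p.
Proof. by rewrite !prefixE -cats1 => /eqP h hs; rewrite -{2}h takel_cat. Qed.

Lemma sum_size_w (T : eqType) (Z : seq (seq T)) N : all (fun z => 0 < size z <= N) Z ->
  \sum_(0 <= m < N) m.+1 * count (fun z => size z == m.+1) Z = \sum_(z <- Z) size z.
Proof.
elim: Z => [|z Z IH] /=; first by rewrite big_nil big1 // => m _; rewrite muln0.
case/andP => /andP [hz0 hz] hZ.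
rewrite big_cons -IH //.
have -> : \sum_(0 <= i < N) i.+1 * ((size z == i.+1) + count (fun z0 => size z0 == i.+1) Z)
   = \sum_(0 <= i < N) (i.+1 * (size z == i.+1)) + \sum_(0 <= i < N) i.+1 * count (fun z0 => size z0 == i.+1) Z.
  by rewrite -big_split /=; apply: eq_bigr => i _; rewrite mulnDr.
congr (_ + _).
case E: (size z) hz0 hz => [//|s] _ hs.
rewrite (bigD1_seq s) /=; first last.
- by rewrite /index_iota iota_uniq.
- by rewrite /index_iota mem_iota subn0.
rewrite eqxx muln1 big1 ?addn0 // => m /negPf.
by rewrite eq_sym eqSS => ->; rewrite muln0.
Qed.

Section Main.
Variables (A : finType) (x : nat -> A) (X : seq (seq A)) (d : nat).
Hypothesis Hse : strict_episturmian x.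
Hypothesis UX : uniq X.
Hypothesis Hbif : bifix_code (fun w => w \in X).
Hypothesis XF : forall w, w \in X -> factor x w.
Hypothesis Hdeg : F_degree (factor x) X d.

Local Notation F := (factor x).

Lemma Hrev : forall w, F w -> F (rev w).
Proof. by case: Hse. Qed.

Lemma Yne : [::] \notin X.
Proof. apply/negP => h; have := Hbif.1 _ h; by rewrite eqxx. Qed.

Lemma PC : pcode X.
Proof.
move=> u v uX vX h; have [H1 _] := Hbif.2 u v uX vX.
by move: H1; rewrite /proper_prefix h /= negbK => /eqP.
Qed.

Lemma SC : scode X.
Proof.
move=> u v uX vX h; have [_ H1] := Hbif.2 u v uX vX.
by move: H1; rewrite /proper_suffix h /= negbK => /eqP.
Qed.

Lemma dle w : F w -> dpre X w <= d.
Proof. by move=> Fw; apply: Hdeg.2 Fw (np_dpre w PC Yne). Qed.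

Lemma w0_ex : exists w0, F w0 /\ dpre X w0 = d.
Proof.
case: Hdeg => [[w0 [Fw0 Hn]] _]; exists w0; split => //.
by rewrite -(np_func PC Yne Hn).
Qed.

Lemma dsufE w : dsuf X w = dpre X w.
Proof. exact: dsuf_dpre PC SC Yne. Qed.

Lemma key_pre w0 v : dpre X w0 = d -> F (w0 ++ v) -> v != [::] -> ~~ nosuf X (w0 ++ v).
Proof.
case/lastP: v => [//|v a] Hd Fv _.
have h2 := dle Fv; rewrite -rcons_cat dpre_rcons in h2.
have h1 := dpre_cat X w0 v; rewrite Hd in h1.
rewrite -rcons_cat; apply/negP => h3; rewrite h3 /= in h2; mlia.
Qed.

Lemma key_suf w0 v : dpre X w0 = d -> F (v ++ w0) -> v != [::] -> ~~ nopre X (v ++ w0).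
Proof.
case: v => [//|a v] Hd Fv _.
have h2 := dle Fv; rewrite -dsufE cat_cons dsuf_cons in h2.
have h1 := dsuf_cat X w0 v; rewrite dsufE Hd in h1.
rewrite cat_cons; apply/negP => h3; rewrite h3 /= in h2; mlia.
Qed.

Lemma X_nonempty : exists y, y \in X.
Proof.
have [w0 [Fw0 Hd]] := w0_ex; have [v [sv Fv]] := factor_ext 1 Fw0.
have := key_pre Hd Fv; rewrite -size_eq0 sv => /(_ isT) /allPn [y yX _].
by exists y.
Qed.

Lemma suf_comp u : F u -> exists2 y, y \in X & (suffix y u || suffix u y).
Proof.
case: u => [|c u] Fu.
  by have [y yX] := X_nonempty; exists y => //; rewrite suffix0s orbT.
have [w0 [Fw0 Hd]] := w0_ex; have [z Fz] := factor_join Hrev Fw0 Fu.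
have hne : z ++ c :: u != [::] by case: z {Fz}.
have /allPn [y yX /negPn hy] := key_pre Hd Fz hne.
exists y => //; apply: suffix_comp hy _.
by rewrite catA; apply: suffix_suffix.
Qed.

Lemma pre_comp u : F u -> exists2 y, y \in X & (prefix y u || prefix u y).
Proof.
case: u => [|c u] Fu.
  by have [y yX] := X_nonempty; exists y => //; rewrite prefix0s orbT.
have [w0 [Fw0 Hd]] := w0_ex; have [z Fz] := factor_join Hrev Fu Fw0.
rewrite catA in Fz.
have /allPn [y yX /negPn hy] := key_suf Hd Fz (isT : (c :: u) ++ z != [::]).
exists y => //; apply: prefix_comp hy _.
by rewrite -catA; apply: prefix_prefix.
Qed.

Local Notation Pl := (proper_prefixes X).
Local Notation Sl := (proper_suffixes X).

Lemma mem_Pl p : (p \in Pl) = has (fun y => prefix p y && (size p < size y)) X.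
Proof.
rewrite /proper_prefixes mem_undup; apply/flattenP/hasP.
- case=> l /mapP [y yX ->] /mapP [i]; rewrite mem_iota add0n => /andP [_ hi] ->.
  by exists y => //; rewrite prefix_take size_takel ?hi // ltnW.
- case=> y yX /andP [hp hs].
  exists [seq take i y | i <- iota 0 (size y)]; first by apply: map_f.
  apply/mapP; exists (size p); first by rewrite mem_iota.
  by move: hp; rewrite prefixE => /eqP.
Qed.

Lemma mem_Sl p : (p \in Sl) = has (fun y => suffix p y && (size p < size y)) X.
Proof.
rewrite /proper_suffixes mem_undup; apply/flattenP/hasP.
- case=> l /mapP [y yX ->] /mapP [i]; rewrite mem_iota add0n => /andP [_ hi] ->.
  exists y => //; rewrite suffix_drop size_drop /=; mlia.
- case=> y yX /andP [hp hs].
  exists [seq drop i.+1 y | i <- iota 0 (size y)]; first by apply: map_f.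
  apply/mapP; exists (size y - (size p).+1).
    by rewrite mem_iota add0n leq0n /= ltn_subrL /= (leq_trans _ hs).
  by rewrite subnSK //; move: hp; rewrite suffixE => /eqP.
Qed.

Lemma Pl_F p : p \in Pl -> F p.
Proof.
rewrite mem_Pl => /hasP [y yX /andP [/prefixP [s Es] _]].
by apply: (@factor_catl _ x p s); rewrite -Es; apply: XF.
Qed.

Lemma Sl_F p : p \in Sl -> F p.
Proof.
rewrite mem_Sl => /hasP [y yX /andP [/suffixP [s Es] _]].
by apply: (@factor_catr _ x s p); rewrite -Es; apply: XF.
Qed.

Lemma P_char u : F u -> nopre X u = (u \in Pl).
Proof.
move=> Fu; apply/idP/idP => [hu|].
- have [y yX /orP [hy|hy]] := pre_comp Fu.
    by move/allP: hu => /(_ y yX); rewrite hy.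
  rewrite mem_Pl; apply/hasP; exists y => //; rewrite hy /=.
  rewrite ltnNge; apply/negP => hs; have E := prefix_eq_size hy hs.
  by move/allP: hu => /(_ y yX); rewrite E prefix_refl.
- rewrite mem_Pl => /hasP [y yX /andP [hp hs]].
  apply/allP => y' y'X; apply/negP => h.
  have := PC y'X yX (prefix_trans h hp) => E; rewrite E in h.
  by have := size_prefix h; rewrite leqNgt hs.
Qed.

Lemma S_char u : F u -> nosuf X u = (u \in Sl).
Proof.
move=> Fu; apply/idP/idP => [hu|].
- have [y yX /orP [hy|hy]] := suf_comp Fu.
    by move/allP: hu => /(_ y yX); rewrite hy.
  rewrite mem_Sl; apply/hasP; exists y => //; rewrite hy /=.
  rewrite ltnNge; apply/negP => hs; have E := suffix_eq_size hy hs.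
  by move/allP: hu => /(_ y yX); rewrite E suffix_refl.
- rewrite mem_Sl => /hasP [y yX /andP [hp hs]].
  apply/allP => y' y'X; apply/negP => h.
  have := SC y'X yX (suffix_trans h hp) => E; rewrite E in h.
  by have := size_suffix h; rewrite leqNgt hs.
Qed.

Definition Fb w := pb (F w).
Definition RSb w := pb (right_special F w).
Local Notation k := #|A|.

Lemma Hse2 n : exists u, size u = n /\ right_special F u /\
       forall v, size v = n -> right_special F v -> v = u.
Proof. by case: Hse => _ [h _]. Qed.

Lemma Hse3 u : right_special F u -> forall a, F (rcons u a).
Proof. by case: Hse => _ [_ h]; apply: h. Qed.

Definition Rw n := proj1_sig (constructive_indefinite_description _ (Hse2 n)).

Lemma Rw_spec n : size (Rw n) = n /\ right_special F (Rw n) /\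
       forall v, size v = n -> right_special F v -> v = Rw n.
Proof. rewrite /Rw; case: constructive_indefinite_description => u h //. Qed.

Lemma RSbE w : RSb w = (w == Rw (size w)).
Proof.
have [_ [h1 h2]] := Rw_spec (size w).
apply/pbP/eqP => [h|->] //; exact: h2.
Qed.

Lemma RS_F w : RSb w -> Fb w.
Proof. by move/pbP => [h _]; apply/pbP. Qed.

Lemma k2 : 1 < k.
Proof.
have [_ [[_ [a [b [ab _]]]] _]] := Rw_spec 0.
by apply/card_gt1P; exists a, b.
Qed.

Lemma extsum w : \sum_(a <- enum A) (Fb (rcons w a) : nat)
   = Fb w + (k - 1) * (RSb w : nat).
Proof.
rewrite sum_bool; case: (boolP (Fb w)) => [/pbP Fw|/pbP nFw]; last first.
  have -> : RSb w = false by apply/negP => /RS_F /pbP.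
  rewrite muln0 /=; apply/eqP; rewrite -leqn0 leqNgt -has_count; apply/hasP => [[a _ /pbP h]].
  by apply: nFw; move: h; rewrite -cats1 => /factor_catl.
case: (boolP (RSb w)) => [/pbP h|/pbP h].
  rewrite (eq_count (a2 := predT)) ?count_predT -?cardE /= ?muln1 ?add1n ?subnKC //.
    by rewrite subn1 prednK //; apply: ltnW; exact: k2.
  by move=> a; apply/pbP; apply: Hse3.
have [v [sv Fv]] := factor_ext 1 Fw.
case: v sv Fv => [|a0 []] // _ Fa0.
rewrite (eq_count (a2 := pred1 a0)) ?count_uniq_mem ?enum_uniq ?mem_enum ?muln0 //.
move=> a /=; apply/pbP/eqP => [Fa|->]; last by rewrite cats1 in Fa0.
apply/eqP; apply/negP => ne; apply: h; split => //.
by exists a, a0; split; [apply/negP|split => //; rewrite -cats1].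
Qed.

Lemma Rw_succ n : exists c, Rw n.+1 = c :: Rw n.
Proof.
have [s1 [[F1 [a [b [ab [Fa Fb']]]]] _]] := Rw_spec n.+1.
case E: (Rw n.+1) s1 F1 Fa Fb' => [//|c r] [sr] F1 Fa Fb'.
exists c; have [_ [_ h]] := Rw_spec n; congr (_ :: _); apply: h => //.
split; first by apply: (@factor_catr _ x [:: c]).
exists a, b; split => //; split; by apply: (@factor_catr _ x [:: c]).
Qed.

Lemma sum_RS n (g : seq A -> nat) :
  \sum_(w <- allw A n) (if RSb w then g w else 0) = g (Rw n).
Proof.
have [s1 _] := Rw_spec n.
apply: sum_single; rewrite ?uniq_allw ?mem_allw ?s1 //.
by move=> w; rewrite mem_allw RSbE => /eqP ->.
Qed.

Lemma uniqPl : uniq Pl. Proof. exact: undup_uniq. Qed.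
Lemma uniqSl : uniq Sl. Proof. exact: undup_uniq. Qed.

Lemma tree_pt p a :
  (rcons p a \in Pl) + (rcons p a \in X) = ((p \in Pl) && Fb (rcons p a)) :> nat.
Proof.
case E1: (rcons p a \in Pl); case E2: (rcons p a \in X).
- move: E1; rewrite mem_Pl => /hasP [y yX /andP [hp hs]].
  by have := PC E2 yX hp => E; rewrite E ltnn in hs.
- have : (p \in Pl) && Fb (rcons p a); last by move=> ->.
  apply/andP; split; last by apply/pbP; apply: Pl_F.
  move: E1; rewrite !mem_Pl => /hasP [y yX /andP [hp hs]].
  apply/hasP; exists y => //; rewrite (prefix_trans (prefix_rcons p a) hp) /=.
  by apply: leq_trans hs; rewrite size_rcons.
- have : (p \in Pl) && Fb (rcons p a); last by move=> ->.
  apply/andP; split; last by apply/pbP; apply: XF.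
  by rewrite mem_Pl; apply/hasP; exists (rcons p a); rewrite // prefix_rcons size_rcons /=.
- case: (boolP ((p \in Pl) && Fb (rcons p a))) => // /andP [pP /pbP Fpa].
  move: E1; rewrite -P_char // => /allPn [y yX /negPn hy].
  move: pP; rewrite mem_Pl => /hasP [y' y'X /andP [hp hs]].
  case: (leqP (size y) (size p)) => hl.
    have := PC yX y'X (prefix_trans (prefix_rcons_le hy hl) hp) => E.
    by rewrite -E in hs; have := leq_trans hs hl; rewrite ltnn.
  have E := prefix_eq_size hy (_ : size (rcons p a) <= size y); rewrite size_rcons in E.
  have {E} E := E hl.
  by rewrite -E yX in E2.
Qed.

Definition acnt m := count (fun z => size z == m) Pl.
Definition bcnt m := count (fun z => size z == m) X.
Definition scnt m := count (fun z => size z == m) Sl.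
Definition jcnt m : nat := Rw m \in Pl.
Definition rho n := dpre X (Rw n).
Definition Phi n := \sum_(w <- allw A n) (if Fb w then dpre X w else 0).
Definition fF n := \sum_(w <- allw A n) (Fb w : nat).

Lemma I1 m : acnt m.+1 + bcnt m.+1 = acnt m + (k - 1) * jcnt m.
Proof.
rewrite /acnt /bcnt -!count_allw ?uniqPl // -big_split sum_allwS /=.
rewrite (eq_bigr (fun p => (p \in Pl : nat) + (k - 1) * (if RSb p then (p \in Pl : nat) else 0))).
  by rewrite big_split /= -big_distrr /= sum_RS count_allw ?uniqPl.
move=> p _; rewrite (eq_bigr (fun a => ((p \in Pl) && Fb (rcons p a) : nat))); last first.
  by move=> a _; rewrite tree_pt.
case: (boolP (p \in Pl)) => pP /=; last by rewrite big1 // if_same muln0.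
rewrite (extsum p); have -> : Fb p by apply/pbP; apply: Pl_F.
by case: (RSb p).
Qed.

Lemma IPhi n : Phi n.+1 = Phi n + (k - 1) * rho n + scnt n.+1.
Proof.
rewrite /Phi /scnt /rho -count_allw ?uniqSl // !sum_allwS.
rewrite -(sum_RS n (fun w => dpre X w)) big_distrr /= -!big_split /=.
apply: eq_bigr => w _.
rewrite (eq_bigr (fun a => dpre X w * Fb (rcons w a) + (rcons w a \in Sl : nat))); last first.
  move=> a _; case: (boolP (Fb (rcons w a))) => [/pbP h|/pbP h] /=.
    by rewrite muln1 dpre_rcons S_char.
  by rewrite muln0 add0n; case: (boolP (rcons w a \in Sl)) => // /Sl_F.
rewrite big_split /= -big_distrr /= extsum.
case: (boolP (RSb w)) => h; first by rewrite (RS_F h) /= muln1 mulnDr muln1 [dpre X w * _]mulnC.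
by case: (Fb w) => /=; rewrite ?muln0 ?muln1 ?addn0.
Qed.

Lemma IfF n : fF n.+1 = fF n + (k - 1).
Proof.
rewrite /fF sum_allwS (eq_bigr (fun w => (Fb w : nat) + (k - 1) * (if RSb w then 1 else 0)))
  ?big_split /= -?big_distrr /= ?sum_RS ?muln1 //.
by move=> w _; rewrite extsum; case: (RSb w).
Qed.

Lemma fF0 : fF 0 = 1.
Proof. by rewrite /fF big_seq1; have -> : Fb [::] by apply/pbP; apply: factor_nil. Qed.

Lemma Phi0 : Phi 0 = 1.
Proof.
rewrite /Phi big_seq1; have -> : Fb [::] by apply/pbP; apply: factor_nil.
rewrite dpre_nil; suff -> : nosuf X [::] by [].
by apply/allP => y yX; rewrite suffixs0; apply/eqP => E; move: Yne; by rewrite -E yX.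
Qed.

Lemma nil_Pl : [::] \in Pl.
Proof.
rewrite -P_char; last exact: factor_nil.
by apply/allP => y yX; rewrite prefixs0; apply/eqP => E; move: Yne; by rewrite -E yX.
Qed.

Lemma nil_Sl : [::] \in Sl.
Proof.
rewrite -S_char; last exact: factor_nil.
by apply/allP => y yX; rewrite suffixs0; apply/eqP => E; move: Yne; by rewrite -E yX.
Qed.

Lemma Rw0 : Rw 0 = [::].
Proof. by have [s _] := Rw_spec 0; apply/eqP; rewrite -size_eq0 s. Qed.

Lemma rho0 : rho 0 = 1.
Proof.
rewrite /rho Rw0 dpre_nil; suff -> : nosuf X [::] by [].
by apply/allP => y yX; rewrite suffixs0; apply/eqP => E; move: Yne; by rewrite -E yX.
Qed.

Lemma jcnt0 : jcnt 0 = 1.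
Proof. by rewrite /jcnt Rw0 nil_Pl. Qed.

Lemma Irho n : rho n.+1 = rho n + jcnt n.+1.
Proof.
have [c E] := Rw_succ n.
have FR : F (Rw n.+1) by have [_ [[h _] _]] := Rw_spec n.+1.
by rewrite /rho -!dsufE E dsuf_cons /jcnt -(P_char FR) E.
Qed.

Lemma scnt0 : scnt 0 = 1.
Proof.
rewrite /scnt (eq_in_count (a2 := pred1 [::])) ?count_uniq_mem ?uniqSl ?nil_Sl //.
by move=> z _ /=; rewrite size_eq0.
Qed.

Definition L := \max_(y <- X) size y.

Lemma sizeX y : y \in X -> size y <= L.
Proof. by move=> yX; apply: (leq_bigmax_seq _ yX). Qed.

Lemma sizePl p : p \in Pl -> size p < L.
Proof.
rewrite mem_Pl => /hasP [y yX /andP [_ hs]]; exact: leq_trans hs (sizeX yX).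
Qed.

Lemma sizeSl p : p \in Sl -> size p < L.
Proof.
rewrite mem_Sl => /hasP [y yX /andP [_ hs]]; exact: leq_trans hs (sizeX yX).
Qed.

Lemma dsuf_long v w : L <= size w -> F (v ++ w) -> dsuf X (v ++ w) = dsuf X w.
Proof.
move=> hw; elim: v => // a v IH Fv.
have Fv' : F (v ++ w) by apply: (@factor_catr _ x [:: a]).
rewrite cat_cons dsuf_cons IH // P_char //.
case: (boolP (a :: v ++ w \in Pl)) => [/sizePl|]; last by rewrite addn0.
rewrite /= size_cat => h; exfalso; mlia.
Qed.

Lemma dlong w : F w -> L <= size w -> dpre X w = d.
Proof.
move=> Fw hw; have [w0 [Fw0 Hd]] := w0_ex; have [z Fz] := factor_join Hrev Fw0 Fw.
apply/eqP; rewrite eqn_leq dle //=.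
have := dpre_cat X w0 (z ++ w); rewrite Hd -dsufE catA dsuf_long ?dsufE //.
by rewrite -catA.
Qed.

Lemma rho_long n : L <= n -> rho n = d.
Proof.
move=> hn; have [s [[h _] _]] := Rw_spec n.
by rewrite /rho dlong // s.
Qed.

Lemma Phi_long n : L <= n -> Phi n = d * fF n.
Proof.
move=> hn; rewrite /Phi /fF big_distrr; apply: eq_big_seq => w; rewrite mem_allw => /eqP hw /=.
case: (boolP (Fb w)) => [/pbP Fw|_] /=; last by rewrite muln0.
by rewrite dlong ?hw // muln1.
Qed.

Lemma acnt_long n : L <= n -> acnt n = 0.
Proof.
move=> hn; apply/eqP; rewrite -leqn0 leqNgt -has_count; apply/hasP => [[z zP /eqP hz]].
by have := sizePl zP; rewrite hz ltnNge hn.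
Qed.

Lemma scnt_long n : L <= n -> scnt n = 0.
Proof.
move=> hn; apply/eqP; rewrite -leqn0 leqNgt -has_count; apply/hasP => [[z zP /eqP hz]].
by have := sizeSl zP; rewrite hz ltnNge hn.
Qed.

Lemma jcnt_long n : L <= n -> jcnt n = 0.
Proof.
move=> hn; rewrite /jcnt; case: (boolP (Rw n \in Pl)) => [h|//].
by move: (sizePl h); have [s _] := Rw_spec n; rewrite s ltnNge hn.
Qed.

Lemma E_T M : \sum_(0 <= m < M) m.+1 * bcnt m.+1 + M * acnt M =
  \sum_(0 <= m < M) acnt m + (k - 1) * \sum_(0 <= m < M) m.+1 * jcnt m.
Proof.
elim: M => [|M IH]; first by rewrite /index_iota subnn /= !big_nil muln0.
rewrite !big_nat_recr //= mulnDr.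
have e : M.+1 * (acnt M.+1 + bcnt M.+1) = M.+1 * (acnt M + (k - 1) * jcnt M) by rewrite I1.
rewrite [(k-1) * (M.+1 * _)]mulnCA.
move: IH e; set u := (k - 1) * jcnt M.
rewrite !mulnDr !mulSn.
move: (\sum_(0 <= m < M) m.+1 * bcnt m.+1) (\sum_(0 <= m < M) acnt m)
  ((k-1) * \sum_(0 <= m < M) m.+1 * jcnt m) (M * acnt M) (M * u) (M * acnt M.+1) (M * bcnt M.+1).
move=> S1 S2 S3 S4 S5 S6 S7; rewrite -!plusE; lia.
Qed.

Lemma E_Phi M : Phi M = \sum_(0 <= m < M.+1) scnt m + (k - 1) * \sum_(0 <= n < M) rho n.
Proof.
elim: M => [|M IH].
  by rewrite Phi0 /index_iota /= big_seq1 big_nil muln0 scnt0.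
have h1 : \sum_(0 <= m < M.+2) scnt m = \sum_(0 <= m < M.+1) scnt m + scnt M.+1.
  by rewrite big_nat_recr.
have h2 : \sum_(0 <= n < M.+1) rho n = \sum_(0 <= n < M) rho n + rho M.
  by rewrite big_nat_recr.
rewrite IPhi IH h1 h2 mulnDr.
move: (\sum_(0 <= m < M.+1) scnt m) ((k - 1) * \sum_(0 <= n < M) rho n) ((k-1) * rho M) (scnt M.+1).
move=> S1 S2 S3 S4; rewrite -!plusE; lia.
Qed.

Lemma rho_sum n : rho n = \sum_(0 <= i < n.+1) jcnt i.
Proof.
elim: n => [|n IH]; first by rewrite rho0 /index_iota /= big_seq1 jcnt0.
by rewrite Irho IH [in RHS]big_nat_recr.
Qed.

Lemma E_rho M : \sum_(0 <= n < M) rho n + \sum_(0 <= i < M) i * jcnt i =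
   M * \sum_(0 <= i < M) jcnt i.
Proof.
elim: M => [|M IH]; first by rewrite /index_iota /= !big_nil.
rewrite !big_nat_recr //= rho_sum big_nat_recr //= mulSn mulnDr.
move: IH; move: (\sum_(0 <= n < M) rho n) (\sum_(0 <= i < M) i * jcnt i)
  (\sum_(0 <= i < M) jcnt i) (M * jcnt M) (M * \sum_(0 <= i < M) jcnt i) (jcnt M).
move=> S1 S2 S3 S4 S5 S6; rewrite -!plusE; lia.
Qed.

Lemma fF_lin M : fF M = 1 + (k - 1) * M.
Proof.
elim: M => [|M IH]; first by rewrite fF0 muln0.
by rewrite IfF IH mulnS -addnA [_ * M + _]addnC.
Qed.

Lemma main_nat : \sum_(y <- X) size y + 2 * d = size Pl + size Sl + k * d.
Proof.
set N := L.+1.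
have hLN : L <= N := leqnSn L.
have T := E_T N; rewrite acnt_long // muln0 addn0 in T.
rewrite (@sum_size_count _ _ N) in T; last first.
  by apply/allP => p /sizePl h; apply: leq_trans h (leqnSn L).
rewrite sum_size_w in T; last first.
  apply/allP => z zX; rewrite lt0n size_eq0 (Hbif.1 _ zX) /=.
  exact: leq_trans (sizeX zX) hLN.
have hj : \sum_(0 <= m < N) m.+1 * jcnt m
    = \sum_(0 <= m < N) m * jcnt m + \sum_(0 <= m < N) jcnt m.
  by rewrite -big_split; apply: eq_bigr => m _; rewrite mulSn addnC.
have hJ : \sum_(0 <= m < N) jcnt m = d by rewrite -rho_sum rho_long.
rewrite hj hJ in T.
have P := E_Phi N; rewrite Phi_long // fF_lin in P.
rewrite (@sum_size_count _ _ N.+1) in P; last first.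
  by apply/allP => p /sizeSl h; apply: leq_trans h (leq_trans hLN (leqnSn N)).
have R := E_rho N; rewrite hJ in R.
have hk : k = (k - 1).+1 by rewrite subn1 prednK //; apply: ltnW; exact: k2.
have hkd : k * d = d + (k - 1) * d by rewrite {1}hk mulSn.
have P' : d * ((k - 1) * N) = (k - 1) * \sum_(0 <= n < N) rho n
     + (k - 1) * \sum_(0 <= m < N) m * jcnt m.
  by rewrite mulnCA [d * N]mulnC -R mulnDr.
rewrite hkd; rewrite mulnDr in T; rewrite mulnDr muln1 P' in P.
move: T P; move: (\sum_(y <- X) size y) (size Pl) (size Sl) ((k-1) * \sum_(0 <= m < N) m * jcnt m)
  ((k-1) * d) ((k - 1) * \sum_(0 <= n < N) rho n).
move=> S1 S2 S3 S4 S5 S6; rewrite -!plusE -!multE; lia.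
Qed.

End Main.





Import GRing.Theory.
Local Open Scope ring_scope.

Theorem mainTheorem19 (A : finType) (x : nat -> A) (X : seq (seq A)) (d : nat) :
  strict_episturmian x ->
  uniq X ->
  F_maximal_bifix (factor x) X ->
  F_degree (factor x) X d ->
  ((\sum_(y <- X) size y)%N)%:Z =
    (size (proper_prefixes X))%:Z + (size (proper_suffixes X))%:Z
    + (#|A|%:Z - 2) * d%:Z.
Proof.
move=> Hse UX [Hbif [XF _]] Hdeg.
have h := main_nat Hse UX Hbif XF Hdeg.
have hk := k2 Hse.
have -> : #|A|%:Z - 2 = (#|A| - 2)%N%:Z by rewrite subzn.
rewrite -PoszM -!PoszD; congr Posz.
move: h; rewrite [(#|A| * d)%N](_ : _ = ((#|A| - 2) * d + 2 * d)%N); last first.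
  by rewrite -mulnDl subnK.
rewrite addnA; move/eqP; rewrite eqn_add2r; move/eqP.
done.
Qed.
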